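(* For a weighted cycle $\mathcal{C}_N$ with $N$ odd, \[ h(k)+\overline{h}(k)=1\quad\text{for }2\leq k\leq N. \]
   Context: A weighted cycle $\mathcal{C}_N$ ($N\geq3$) has vertices $v_1,\ldots,v_N$ and edges exactly $\{v_i,v_{i+1}\}$ (indices mod $N$), each with positive symmetric weight $w_{uv}$ ($w_{uv}=0$ for non-edges). $d_u=\sum_vw_{uv}$, $|E(A,B)|:=\sum_{u\in A,v\in B}w_{uv}$, $\mathrm{vol}(A)=\sum_{u\in A}d_u$, $\overline{A}$ the complement. For nonempty $S$, $\phi(S)=|E(S,\overline{S})|/\mathrm{vol}(S)$; $h(k):=\min\max_{1\leq i\leq k}\phi(S_i)$ over all collections of $k$ nonempty pairwise disjoint vertex subsets. For disjoint $V_1,V_2$ with $V_1\cup V_2\neq\emptyset$, $\overline{\phi}(V_1,V_2)=2|E(V_1,V_2)|/\mathrm{vol}(V_1\cup V_2)$; $\overline{h}(k):=\max\min_{1\leq i\leq k}\overline{\phi}(V_{2i-1},V_{2i})$ over all collections of $k$ pairs $(V_1,V_2),\ldots,(V_{2k-1},V_{2k})$ of pairwise disjoint vertex subsets with $V_{2i-1}\cup V_{2i}\neq\emptyset$ for each $i$. *)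

(* Defs.v *)
From HB Require Import structures.
From mathcomp Require Import all_boot all_order all_algebra.
Set Implicit Arguments. Unset Strict Implicit. Unset Printing Implicit Defensive.
Import Order.TTheory GRing.Theory Num.Theory.
Local Open Scope ring_scope.

Section Cycle.
Variables (R : realFieldType) (N : nat) (w : 'I_N -> R).

(* Weighted cycle on vertices 'I_N (vertex i = v_{i+1}); w i is the weight of
   the edge {i, i+1 mod N}.  wt u v is the symmetric weight w_{uv}. *)
Definition wt (u v : 'I_N) : R :=
  if (u.+1 %% N == v)%N then w u
  else if (v.+1 %% N == u)%N then w v else 0.

Definition deg (u : 'I_N) : R := \sum_(v : 'I_N) wt u v.

Definition cutE (A B : {set 'I_N}) : R :=
  \sum_(u in A) \sum_(v in B) wt u v.

Definition vol (A : {set 'I_N}) : R := \sum_(u in A) deg u.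

Definition phi (S : {set 'I_N}) : R := cutE S (~: S) / vol S.

Definition phibar (V1 V2 : {set 'I_N}) : R :=
  2 * cutE V1 V2 / vol (V1 :|: V2).

Definition admissible k (S : {ffun 'I_k -> {set 'I_N}}) : bool :=
  [forall i, S i != set0] &&
  [forall i, forall j, (i != j) ==> [disjoint S i & S j]].

Definition admissible_pairs k
    (P : {ffun 'I_k -> {set 'I_N} * {set 'I_N}}) : bool :=
  [forall i, [disjoint (P i).1 & (P i).2]] &&
  [forall i, ((P i).1 :|: (P i).2) != set0] &&
  [forall i, forall j, (i != j) ==>
     [disjoint ((P i).1 :|: (P i).2) & ((P j).1 :|: (P j).2)]].

(* The sentinels 1 (for min) and 0 (for max) are harmless since
   0 <= phi <= 1 on nonempty sets and admissible collections exist for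
   1 <= k <= N. *)
Definition h k : R :=
  \big[Num.min/1]_(S : {ffun 'I_k -> {set 'I_N}} | admissible S)
     \big[Num.max/0]_(i < k) phi (S i).

(* hbar(k) = max over admissible pair collections of min_i phibar; sentinels
   0 (max) and 1 (min) are harmless since 0 <= phibar <= 1. *)
Definition hbar k : R :=
  \big[Num.max/0]_(P : {ffun 'I_k -> {set 'I_N} * {set 'I_N}}
                    | admissible_pairs P)
     \big[Num.min/1]_(i < k) phibar (P i).1 (P i).2.

End Cycle.

(* Main.v *)
Require Import Defs.
From HB Require Import structures.
From mathcomp Require Import all_boot all_order all_algebra.
Import Order.TTheory GRing.Theory Num.Theory.
Local Open Scope ring_scope.
From mathcomp Require Import zify ring lra.
Set Implicit Arguments. Unset Strict Implicit.

Section S.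
Variables (R : realFieldType) (N : nat) (w : 'I_N -> R).
Hypothesis N3 : (3 <= N)%N.
Hypothesis wpos : forall i, 0 < w i.

Lemma wt_sym u v : wt w u v = wt w v u.
Proof.
rewrite /wt; case: eqP => e1; case: eqP => e2 //.
have ltu := ltn_ord u; have ltv := ltn_ord v.
exfalso; move: e1 e2.
case: (ltnP u.+1 N) => h1; case: (ltnP v.+1 N) => h2.
- rewrite !modn_small //; lia.
- have -> : v.+1 = N by lia. rewrite modnn modn_small //; lia.
- have -> : u.+1 = N by lia. rewrite modnn modn_small //; lia.
- have -> : u.+1 = N by lia. have -> : v.+1 = N by lia. rewrite modnn; lia.
Qed.

Lemma wt_ge0 u v : 0 <= wt w u v.
Proof. rewrite /wt; case: ifP => _; [exact: ltW|case: ifP => _ //; exact: ltW]. Qed.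

Lemma deg_gt0 u : 0 < deg w u.
Proof.
have hN : (0 < N)%N by lia.
pose v := Ordinal (ltn_pmod u.+1 hN).
rewrite /deg (bigD1 v) //= ltr_wpDr //; first by apply: sumr_ge0 => *; apply: wt_ge0.
by rewrite /wt /= eqxx.
Qed.

Lemma cutE_ge0 (A B : {set 'I_N}) : 0 <= cutE w A B.
Proof. by apply: sumr_ge0 => *; apply: sumr_ge0 => *; apply: wt_ge0. Qed.

Lemma cutE_sym (A B : {set 'I_N}) : cutE w A B = cutE w B A.
Proof. rewrite /cutE exchange_big; apply: eq_bigr => u _; apply: eq_bigr => v _; exact: wt_sym. Qed.

Lemma cutEUl (A B C : {set 'I_N}) : [disjoint A & B] -> cutE w (A :|: B) C = cutE w A C + cutE w B C.
Proof. move=> d; rewrite /cutE (eq_bigl [predU A & B]) ?bigU // => x; by rewrite !inE. Qed.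

Lemma cutEUr (A B C : {set 'I_N}) : [disjoint A & B] -> cutE w C (A :|: B) = cutE w C A + cutE w C B.
Proof. by move=> d; rewrite cutE_sym cutEUl // !(cutE_sym C). Qed.

Lemma vol_split (S : {set 'I_N}) : vol w S = cutE w S S + cutE w S (~: S).
Proof.
rewrite /vol /cutE -big_split /=; apply: eq_bigr => u _.
rewrite /deg (bigID (fun v => v \in S)) /=; congr (_ + _).
by apply: eq_bigl => v; rewrite inE.
Qed.

Lemma vol_gt0 (S : {set 'I_N}) : S != set0 -> 0 < vol w S.
Proof.
case/set0Pn => x xS; rewrite /vol (bigD1 x) //= ltr_wpDr //.
  by apply: sumr_ge0 => *; apply: ltW; apply: deg_gt0.
exact: deg_gt0.
Qed.

Lemma phibar_le (V1 V2 : {set 'I_N}) : [disjoint V1 & V2] -> V1 :|: V2 != set0 ->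
  phibar w V1 V2 <= 1 - phi w (V1 :|: V2).
Proof.
move=> d ne; have vp := vol_gt0 ne.
have e := vol_split (V1 :|: V2).
rewrite cutEUl // !cutEUr // (cutE_sym V2 V1) in e.
have h1 := cutE_ge0 V1 V1; have h2 := cutE_ge0 V2 V2.
rewrite /phibar /phi; move: vp e h1 h2.
set v := vol w _; set a := cutE w V1 V1; set b := cutE w V2 V2.
set c := cutE w V1 V2; set c2 := cutE w (V1 :|: V2) _.
move=> vp e h1 h2.
rewrite lerBrDr -mulrDl ler_pdivrMr // mul1r; lra.
Qed.

Definition dd (m v : nat) : nat := if (m < v)%N then (v - m)%N else (v + N - m)%N.

Lemma dd_succ (m u : nat) : (m < N)%N -> (u < N)%N -> u <> m -> (u.+1 %% N)%N <> m ->
  dd m (u.+1 %% N) = (dd m u).+1.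
Proof.
move=> hm hu h1; rewrite /dd.
case: (ltnP u.+1 N) => h2.
- rewrite modn_small // => h3; repeat case: ifP => ?; lia.
- have e : u.+1 = N by lia.
  rewrite e modnn => h3 /=; case: ifP => ?; lia.
Qed.

Definition bipart (S : {set 'I_N}) : {set 'I_N} * {set 'I_N} :=
  match [pick x in ~: S] with
  | Some m => ([set v in S | odd (dd m v)], [set v in S | ~~ odd (dd m v)])
  | None => (S, set0)
  end.

Lemma bipart_disj S : [disjoint (bipart S).1 & (bipart S).2].
Proof.
rewrite /bipart; case: pickP => [m _|_] /=; last by rewrite -setI_eq0 setI0.
rewrite -setI_eq0; apply/eqP/setP => x; rewrite !inE.
by case: (odd _); rewrite ?andbF ?andbT ?andbb.
Qed.

Lemma bipart_U S : (bipart S).1 :|: (bipart S).2 = S.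
Proof.
rewrite /bipart; case: pickP => [m _|_] /=; last exact: setU0.
apply/setP => x; rewrite !inE; by case: (x \in S); case: (odd _).
Qed.

Lemma wt_zero_same (S : {set 'I_N}) (m : 'I_N) (b : bool) u v :
  m \notin S -> u \in S -> v \in S -> odd (dd m u) = b -> odd (dd m v) = b ->
  wt w u v = 0.
Proof.
move=> mS uS vS hu hv.
have nm : forall x, x \in S -> nat_of_ord x <> nat_of_ord m.
  by move=> x xS e; move: mS; rewrite -(val_inj e) xS.
rewrite /wt; case: eqP => [e1|_].
  have := dd_succ (ltn_ord m) (ltn_ord u) (nm _ uS).
  rewrite e1 => /(_ (nm _ vS)) e; move: hv; rewrite e /= hu => /eqP.
  by case: b {hu e}.
case: eqP => [e2|_] //.
have := dd_succ (ltn_ord m) (ltn_ord v) (nm _ vS).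
rewrite e2 => /(_ (nm _ uS)) e; move: hu; rewrite e /= hv => /eqP.
by case: b {hv e}.
Qed.

Lemma phibar_bipart S : S != setT -> S != set0 ->
  phibar w (bipart S).1 (bipart S).2 = 1 - phi w S.
Proof.
move=> nT ne.
have vp := vol_gt0 ne.
have e := vol_split S.
rewrite -{2 3}(bipart_U S) cutEUl ?bipart_disj // !cutEUr ?bipart_disj // in e.
have z : cutE w (bipart S).1 (bipart S).1 = 0 /\ cutE w (bipart S).2 (bipart S).2 = 0.
  rewrite /bipart; case: pickP => [m|] /=; last first.
    by move=> h; exfalso; move/negP: nT; apply; apply/eqP/setP=> x; move: (h x); rewrite !inE; case: (x \in S).
  rewrite inE => mS; split; apply: big1 => u; rewrite inE => /andP[uS hu];
    apply: big1 => v; rewrite inE => /andP[vS hv].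
    by apply: (wt_zero_same (b:=true) mS uS vS); apply/eqP; rewrite eqb_id.
  by apply: (wt_zero_same (b:=false) mS uS vS); apply/eqP; rewrite eqbF_neg.
case: z => z1 z2; rewrite z1 z2 (cutE_sym (bipart S).2) in e.
rewrite /phibar /phi bipart_U; apply: (mulIf (lt0r_neq0 vp)).
rewrite mulrBl mul1r !divfK ?(lt0r_neq0 vp) //; rewrite e; lra.
Qed.
End S.

Lemma other k (i : 'I_k) : (2 <= k)%N -> exists j : 'I_k, i != j.
Proof.
move=> k2; have h0 : (0 < k)%N by lia. have h1 : (1 < k)%N by lia.
case: (eqVneq i (Ordinal h0)) => [->|ne]; last by exists (Ordinal h0).
by exists (Ordinal h1); apply/eqP => /(congr1 val).
Qed.

Theorem proposition7p2 (R : realFieldType) (N : nat) (w : 'I_N -> R) :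
  (3 <= N)%N -> odd N -> (forall i, 0 < w i) ->
  forall k : nat, (2 <= k <= N)%N -> h w k + hbar w k = 1.
Proof.
move=> N3 _ wpos k /andP[k2 kN].
have hle1 : h w k <= 1 by apply: bigmin_le_id.
have hbge0 : 0 <= hbar w k by apply: bigmax_ge_id.
have A : hbar w k <= 1 - h w k.
  apply: bigmax_le; first by lra.
  move=> P /andP[/andP[/forallP d1 /forallP d2] /forallP d3].
  pose S := [ffun i => (P i).1 :|: (P i).2].
  have adS : admissible S.
    apply/andP; split; apply/forallP => i; rewrite ffunE //.
    apply/forallP => j; rewrite ffunE; exact: (forallP (d3 i) j).
  have hF := bigmin_le_cond 1 (fun S : {ffun 'I_k -> {set 'I_N}} => \big[Num.max/0]_(i < k) phi w (S i)) adS.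
  rewrite -/(h w k) in hF.
  have G1 : \big[Num.min/1]_(i < k) phibar w (P i).1 (P i).2 <= 1 by apply: bigmin_le_id.
  suff : \big[Num.max/0]_(i < k) phi w (S i) <= 1 - \big[Num.min/1]_(i < k) phibar w (P i).1 (P i).2.
    move=> ?; lra.
  apply: bigmax_le; first by lra.
  move=> i _; rewrite ffunE.
  have := phibar_le N3 wpos (d1 i) (d2 i).
  have := bigmin_le_cond 1 (fun i => phibar w (P i).1 (P i).2) (isT : predT i).
  move=> ??; lra.
have B : 1 - hbar w k <= h w k.
  apply: le_bigmin; first by lra.
  move=> S /andP[/forallP ne /forallP dj].
  pose P := [ffun i => bipart (S i)].
  have nT : forall i, S i != setT.
    move=> i; have [j ij] := other i k2.
    apply/eqP => e; move: (forallP (dj i) j); rewrite ij e /= -setI_eq0 setTI.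
    by move/eqP => e'; move: (ne j); rewrite e' eqxx.
  have adP : admissible_pairs P.
    apply/andP; split; first (apply/andP; split); apply/forallP => i; rewrite ?ffunE.
    - exact: bipart_disj.
    - by rewrite bipart_U.
    - apply/forallP => j; rewrite !ffunE !bipart_U; exact: (forallP (dj i) j).
  have hG := le_bigmax_cond 0 (fun P : {ffun 'I_k -> {set 'I_N} * {set 'I_N}} => \big[Num.min/1]_(i < k) phibar w (P i).1 (P i).2) adP.
  rewrite -/(hbar w k) in hG.
  have F0 : 0 <= \big[Num.max/0]_(i < k) phi w (S i) by apply: bigmax_ge_id.
  suff : 1 - \big[Num.max/0]_(i < k) phi w (S i) <= \big[Num.min/1]_(i < k) phibar w (P i).1 (P i).2.
    move=> ?; lra.
  apply: le_bigmin; first by lra.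
  move=> i _; rewrite ffunE phibar_bipart ?nT ?ne //.
  have := le_bigmax_cond 0 (fun i => phi w (S i)) (isT : predT i).
  move=> ?; lra.
lra.
Qed.
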